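(* Let $F$ be a field and let $R$ be an $F$-algebra generated (as an $F$-algebra) by two principally nilpotent elements $x,y$ such that $x+y$ is not nilpotent. Then $R$ is a local ring satisfying (NK), and its Jacobson radical satisfies $\mathcal J(R)=xR+yR=Rx+Ry$.
   Context: All rings are associative with unit. A right ideal is nil if all its elements are nilpotent. A ring satisfies the condition (NK) if it contains two nil right ideals whose sum is not nil. An element $a$ of a ring $R$ is principally nilpotent if $aR$ is a nil right ideal. A ring is local if it has a unique maximal right ideal. *)

(* Defs.v *)
From HB Require Import structures.
From mathcomp Require Import all_boot all_order all_algebra.
Set Implicit Arguments. Unset Strict Implicit. Unset Printing Implicit Defensive.
Import GRing.Theory.
Local Open Scope ring_scope.

Definition nilpotent_elt (R : nzRingType) (a : R) : Prop := exists n : nat, a ^+ n = 0.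

Definition right_ideal (R : nzRingType) (I : R -> Prop) : Prop :=
  [/\ I 0, (forall a b, I a -> I b -> I (a - b)) & (forall a r, I a -> I (a * r))].

Definition nil_set (R : nzRingType) (I : R -> Prop) : Prop :=
  forall a, I a -> nilpotent_elt a.

Definition nil_right_ideal (R : nzRingType) (I : R -> Prop) : Prop :=
  right_ideal I /\ nil_set I.

Definition sum_set (R : nzRingType) (I J : R -> Prop) : R -> Prop :=
  fun z => exists a b, [/\ I a, J b & z = a + b].

Definition NK (R : nzRingType) : Prop :=
  exists I J : R -> Prop,
    [/\ nil_right_ideal I, nil_right_ideal J & ~ nil_set (sum_set I J)].

Definition principally_nilpotent (R : nzRingType) (a : R) : Prop :=
  nil_right_ideal (fun z => exists r, z = a * r).

Definition maximal_right_ideal (R : nzRingType) (M : R -> Prop) : Prop :=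
  [/\ right_ideal M, ~ M 1 &
      forall N : R -> Prop, right_ideal N -> (forall z, M z -> N z) ->
        (forall z, N z <-> M z) \/ (forall z, N z)].

Definition local_ring (R : nzRingType) : Prop :=
  exists M : R -> Prop, maximal_right_ideal M /\
    forall N, maximal_right_ideal N -> forall z, N z <-> M z.

Definition jacobson (R : nzRingType) : R -> Prop :=
  fun z => forall M, maximal_right_ideal M -> M z.

Definition generated_by2 (F : fieldType) (R : algType F) (x y : R) : Prop :=
  forall P : R -> Prop,
    P 1 -> P x -> P y ->
    (forall a b, P a -> P b -> P (a + b)) ->
    (forall (k : F) a, P a -> P (k *: a)) ->
    (forall a b, P a -> P b -> P (a * b)) ->
    forall z, P z.

(* Main.v *)
Require Import Defs.
From HB Require Import structures.
From mathcomp Require Import all_boot all_order all_algebra.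
From Stdlib Require Import Classical.
Import GRing.Theory.
Local Open Scope ring_scope.

Lemma nil_rinv (R : nzRingType) (a : R) n : a ^+ n = 0 ->
  (1 - a) * \sum_(i < n) a ^+ i = 1.
Proof.
move=> Ha; have := subrX1 a n; rewrite Ha sub0r => E.
by rewrite -opprB mulNr -E opprK.
Qed.

Lemma one_not_nil (R : nzRingType) : ~ nilpotent_elt (1 : R).
Proof. by case=> n; rewrite expr1n; apply/eqP; apply: oner_neq0. Qed.

Section S.
Variables (F : fieldType) (R : algType F) (x y : R).

Definition Jr : R -> Prop := fun z => exists r s, z = x * r + y * s.
Definition Jl : R -> Prop := fun z => exists r s, z = r * x + s * y.

Lemma Jr_add a b : Jr a -> Jr b -> Jr (a + b).
Proof.
move=> [r1 [s1 ->]] [r2 [s2 ->]]; exists (r1 + r2), (s1 + s2).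
by rewrite !mulrDr addrACA.
Qed.

Lemma Jl_add a b : Jl a -> Jl b -> Jl (a + b).
Proof.
move=> [r1 [s1 ->]] [r2 [s2 ->]]; exists (r1 + r2), (s1 + s2).
by rewrite !mulrDl addrACA.
Qed.

Lemma Jr_right : right_ideal Jr.
Proof.
split.
- by exists 0, 0; rewrite !mulr0 addr0.
- move=> a b [r1 [s1 ->]] [r2 [s2 ->]]; exists (r1 - r2), (s1 - s2).
  by rewrite !mulrBr opprD addrACA.
- move=> a t [r [s ->]]; exists (r * t), (s * t).
  by rewrite mulrDl !mulrA.
Qed.

Lemma Jl_left a t : Jl a -> Jl (t * a).
Proof. by move=> [r [s ->]]; exists (t * r), (t * s); rewrite mulrDr !mulrA. Qed.

Lemma Jr_scale (k : F) a : Jr a -> Jr (k *: a).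
Proof.
by move=> [r [s ->]]; exists (k *: r), (k *: s); rewrite scalerDr !scalerAr.
Qed.

Lemma Jl_scale (k : F) a : Jl a -> Jl (k *: a).
Proof.
by move=> [r [s ->]]; exists (k *: r), (k *: s); rewrite scalerDr !scalerAl.
Qed.

Lemma mul_decomp (k1 k2 : F) (j1 j2 : R) :
  (k1 *: 1 + j1) * (k2 *: 1 + j2) =
  (k1 * k2) *: 1 + ((k1 *: j2 + k2 *: j1) + j1 * j2).
Proof.
rewrite mulrDl !mulrDr -!scalerAl !mul1r -!scalerAr !mulr1 scalerA.
by rewrite -!addrA; congr (_ + _); rewrite addrCA.
Qed.

Hypothesis gen : generated_by2 x y.

Lemma decompR z : exists k j, Jr j /\ z = k *: 1 + j.
Proof.
apply: (gen (fun z => exists k j, Jr j /\ z = k *: 1 + j)).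
- exists 1, 0; split; first by exists 0, 0; rewrite !mulr0 addr0.
  by rewrite scale1r addr0.
- exists 0, x; split; first by exists 1, 0; rewrite mulr1 mulr0 addr0.
  by rewrite scale0r add0r.
- exists 0, y; split; first by exists 0, 1; rewrite mulr1 mulr0 add0r.
  by rewrite scale0r add0r.
- move=> a b [k1 [j1 [H1 ->]]] [k2 [j2 [H2 ->]]]; exists (k1 + k2), (j1 + j2).
  by split; [apply: Jr_add|rewrite scalerDl addrACA].
- move=> k a [k1 [j1 [H1 ->]]]; exists (k * k1), (k *: j1).
  by split; [apply: Jr_scale|rewrite scalerDr scalerA].
- move=> a b [k1 [j1 [H1 ->]]] [k2 [j2 [H2 ->]]]; exists (k1 * k2).
  eexists; split; last by apply: mul_decomp.
  apply: Jr_add; first by apply: Jr_add; apply: Jr_scale.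
  by case: Jr_right => _ _; apply.
Qed.

Lemma decompL z : exists k j, Jl j /\ z = k *: 1 + j.
Proof.
apply: (gen (fun z => exists k j, Jl j /\ z = k *: 1 + j)).
- exists 1, 0; split; first by exists 0, 0; rewrite !mul0r addr0.
  by rewrite scale1r addr0.
- exists 0, x; split; first by exists 1, 0; rewrite mul1r mul0r addr0.
  by rewrite scale0r add0r.
- exists 0, y; split; first by exists 0, 1; rewrite mul1r mul0r add0r.
  by rewrite scale0r add0r.
- move=> a b [k1 [j1 [H1 ->]]] [k2 [j2 [H2 ->]]]; exists (k1 + k2), (j1 + j2).
  by split; [apply: Jl_add|rewrite scalerDl addrACA].
- move=> k a [k1 [j1 [H1 ->]]]; exists (k * k1), (k *: j1).
  by split; [apply: Jl_scale|rewrite scalerDr scalerA].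
- move=> a b [k1 [j1 [H1 ->]]] [k2 [j2 [H2 ->]]]; exists (k1 * k2).
  eexists; split; last by apply: mul_decomp.
  apply: Jl_add; first by apply: Jl_add; apply: Jl_scale.
  by apply: Jl_left.
Qed.

Lemma Jr_Jl z : Jr z <-> Jl z.
Proof.
split.
- move=> [r [s ->]]; apply: Jl_add.
  + have [k [j [Hj ->]]] := decompL r.
    rewrite mulrDr -scalerAr mulr1; apply: Jl_add.
    * by apply: Jl_scale; exists 1, 0; rewrite mul1r mul0r addr0.
    * by case: Hj => a [b ->]; exists (x * a), (x * b); rewrite mulrDr !mulrA.
  + have [k [j [Hj ->]]] := decompL s.
    rewrite mulrDr -scalerAr mulr1; apply: Jl_add.
    * by apply: Jl_scale; exists 0, 1; rewrite mul1r mul0r add0r.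
    * by case: Hj => a [b ->]; exists (y * a), (y * b); rewrite mulrDr !mulrA.
- move=> [r [s ->]]; case: Jr_right => _ _ Hm; apply: Jr_add.
  + have [k [j [Hj ->]]] := decompR r.
    rewrite mulrDl -scalerAl mul1r; apply: Jr_add.
    * by apply: Jr_scale; exists 1, 0; rewrite mulr1 mulr0 addr0.
    * by apply: Hm.
  + have [k [j [Hj ->]]] := decompR s.
    rewrite mulrDl -scalerAl mul1r; apply: Jr_add.
    * by apply: Jr_scale; exists 0, 1; rewrite mulr1 mulr0 add0r.
    * by apply: Hm.
Qed.

End S.
Arguments Jr {F R}.
Arguments Jl {F R}.
Arguments decompR {F R x y}.
Arguments Jr_Jl {F R x y}.
Arguments Jr_right {F R x y}.

Lemma ri_add (R : nzRingType) (I : R -> Prop) a b :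
  right_ideal I -> I a -> I b -> I (a + b).
Proof.
case=> H0 HB _ Ha Hb; have := HB a (0 - b) Ha (HB 0 b H0 Hb).
by rewrite sub0r opprK.
Qed.

Lemma max_contains (R : nzRingType) (M : R -> Prop) (a : R) :
  maximal_right_ideal M -> (forall r, nilpotent_elt (a * r)) -> M a.
Proof.
case=> HM N1 Hmax Hnil.
have HMr := HM; case: HM => M0 MB Mr.
pose N := fun z => exists m r, M m /\ z = m + a * r.
have HN : right_ideal N.
  split.
  - by exists 0, 0; rewrite mulr0 addr0.
  - move=> u v [m1 [r1 [H1 ->]]] [m2 [r2 [H2 ->]]]; exists (m1 - m2), (r1 - r2).
    by split; [apply: MB|rewrite mulrBr opprD addrACA].
  - move=> u t [m [r [H ->]]]; exists (m * t), (r * t).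
    by split; [apply: Mr|rewrite mulrDl mulrA].
have sub : forall z, M z -> N z by move=> z Hz; exists z, 0; rewrite mulr0 addr0.
case: (Hmax N HN sub) => [E|All].
- by apply/E; exists 0, 1; rewrite mulr1 add0r.
- exfalso; case: (All 1) => m [r [Hm E]].
  have [n Hn] := Hnil r.
  have Hm' : m = 1 - a * r by rewrite E addrK.
  apply: N1; have := Mr _ (\sum_(i < n) (a * r) ^+ i) Hm; by rewrite Hm' (nil_rinv _ _ _ Hn).
Qed.

Theorem mainTheorem5 (F : fieldType) (R : algType F) (x y : R) :
  generated_by2 x y ->
  principally_nilpotent x -> principally_nilpotent y ->
  ~ nilpotent_elt (x + y) ->
  [/\ local_ring R, NK R,
      (forall z, jacobson z <-> exists r s, z = x * r + y * s) &
      (forall z, jacobson z <-> exists r s, z = r * x + s * y)].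
Proof.
move=> gen hx hy hxy.
have xn : forall r, nilpotent_elt (x * r) by move=> r; case: hx => _; apply; exists r.
have yn : forall r, nilpotent_elt (y * r) by move=> r; case: hy => _; apply; exists r.
have Mc : forall M, maximal_right_ideal M -> forall z, Jr x y z -> M z.
  move=> M HM z [r [s ->]]; have HMr : right_ideal M by case: HM.
  have Mx := @max_contains _ _ _ HM xn; have My := @max_contains _ _ _ HM yn.
  case: (HMr) => _ _ Mr.
  by apply: ri_add => //; apply: Mr.
have J1 : ~ Jr x y 1.
  move=> [r [s E]]; have [n Hn] := xn r.
  have Hs : y * s = 1 - x * r by rewrite E addrAC subrr add0r.
  have := nil_rinv _ _ _ Hn; rewrite -Hs -mulrA => E1.
  by apply: (@one_not_nil R); rewrite -E1; apply: yn.
have Jmax : maximal_right_ideal (Jr x y).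
  split; [exact: Jr_right | exact: J1 |].
  move=> N HN sub.
  case: (classic (forall z, N z -> Jr x y z)) => [H|H].
    by left=> z; split; [apply: H|apply: sub].
  right; have [z Hz] := not_all_ex_not _ _ H.
  have [Nz nJz] := imply_to_and _ _ Hz.
  have [k [j [Hj Ez]]] := decompR gen z.
  have k0 : k != 0.
    apply/negP=> /eqP k0; apply: nJz; by rewrite Ez k0 scale0r add0r.
  have Nk : N (k *: 1).
    have -> : k *: 1 = z - j by rewrite Ez addrK.
    by case: HN => _ HB _; apply: HB => //; apply: sub.
  have N1 : N 1.
    have -> : (1 : R) = (k *: 1) * (k^-1 *: 1).
      by rewrite -scalerAl mul1r scalerA divff // scale1r.
    by case: HN => _ _; apply.
  by move=> w; rewrite -(mul1r w); case: HN => _ _; apply.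
have jacE : forall z, jacobson z <-> Jr x y z.
  by move=> z; split; [move=> Hz; apply: Hz | move=> Hz M HM; apply: Mc].
split.
- exists (Jr x y); split => // N HN.
  have sub := Mc N HN.
  case: Jmax => _ _ Hm; case: HN => HNr HN1 _.
  case: (Hm N HNr sub) => [E|All]; first exact: E.
  by exfalso; apply: HN1; apply: All.
- exists (fun z => exists r, z = x * r), (fun z => exists r, z = y * r).
  split => //.
  move=> Hs; apply: hxy; apply: Hs.
  by exists x, y; split => //; exists 1; rewrite mulr1.
- exact: jacE.
- move=> z; apply: iff_trans (jacE z) _; exact: Jr_Jl gen z.
Qed.
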